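(* Let $F\colon[0,1]^*\to\mathbb{R}$ be a standard function such that $F_1$ is strictly increasing (resp. strictly decreasing). Then the following are equivalent: (1) $F$ is preassociative and unarily quasi-range-idempotent, and $F_2$ is symmetric, nondecreasing (resp. nonincreasing) in each argument, and satisfies $F_2(1,x)=F_1(x)$ for every $x\in[0,1]$; (2) there exist a strictly increasing (resp. strictly decreasing) function $f\colon[0,1]\to\mathbb{R}$ and a variadic t-norm $H\colon[0,1]^*\to[0,1]\cup\{\varepsilon\}$ such that $F^{\flat}=f\circ H^{\flat}$. In this case $f=F_1$.
   Context: $X^*=\bigcup_{n\geqslant 0}X^n$ denotes the finite tuples over $X$, $X^0=\{\varepsilon\}$ with $\varepsilon\notin X$ the empty tuple; $F(\mathbf{x},\mathbf{y})$ denotes $F$ applied to the concatenation, concatenation with $\varepsilon$ leaving tuples unchanged. $F_n=F|_{X^n}$, $F^{\flat}=F|_{X^*\setminus\{\varepsilon\}}$. $F$ is standard if $F(\mathbf{x})=F(\varepsilon)$ only for $\mathbf{x}=\varepsilon$. $F$ is preassociative if for all tuples $\mathbf{x},\mathbf{y},\mathbf{y}',\mathbf{z}$, $F(\mathbf{y})=F(\mathbf{y}')$ implies $F(\mathbf{x},\mathbf{y},\mathbf{z})=F(\mathbf{x},\mathbf{y}',\mathbf{z})$. $F$ is unarily quasi-range-idempotent if $\mathrm{ran}(F_1)=\mathrm{ran}(F^{\flat})$. An operation $H\colon X^*\to X\cup\{\varepsilon\}$ is $\varepsilon$-standard if $H(\varepsilon)=\varepsilon$ and $H(\mathbf{x})\neq\varepsilon$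 for $\mathbf{x}\neq\varepsilon$, and associative if $H(\mathbf{x},\mathbf{y},\mathbf{z})=H(\mathbf{x},H(\mathbf{y}),\mathbf{z})$ for all tuples (a value $\varepsilon$ treated as the empty tuple). A t-norm is an operation $T\colon[0,1]^2\to[0,1]$ that is nondecreasing in each argument, symmetric, associative, and satisfies $T(1,x)=x$ for all $x$. A variadic t-norm is an associative $\varepsilon$-standard operation $H\colon[0,1]^*\to[0,1]\cup\{\varepsilon\}$ whose binary part $H_2$ is a t-norm. *)

(* Defs.v *)
From Stdlib Require Import Reals List Lra.
Import ListNotations.
Open Scope R_scope.

(* The carrier X = [0,1]. Tuples over X are lists; the empty list is epsilon. *)
Definition I01 : Type := { x : R | 0 <= x <= 1 }.
Definition v (a : I01) : R := proj1_sig a.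

Lemma one01_pf : 0 <= 1 <= 1. Proof. lra. Qed.
Definition one01 : I01 := exist _ 1 one01_pf.

Definition strict_mono_dir (inc : bool) (g : I01 -> R) : Prop :=
  forall a b : I01, v a < v b -> if inc then g a < g b else g b < g a.

Definition weak_mono_dir (inc : bool) (g : I01 -> R) : Prop :=
  forall a b : I01, v a <= v b -> if inc then g a <= g b else g b <= g a.

Definition standard (F : list I01 -> R) : Prop :=
  forall x, F x = F [] -> x = [].

Definition preassociative (F : list I01 -> R) : Prop :=
  forall x y y' z, F y = F y' -> F (x ++ y ++ z) = F (x ++ y' ++ z).

Definition unarily_quasi_range_idempotent (F : list I01 -> R) : Prop :=
  forall r : R, (exists a, F [a] = r) <-> (exists x, x <> [] /\ F x = r).

(* H : X^* -> X ∪ {epsilon}, with None standing for epsilon. *)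
Definition eps_standard (H : list I01 -> option I01) : Prop :=
  H [] = None /\ forall x, x <> [] -> H x <> None.

Definition opt_tuple (o : option I01) : list I01 :=
  match o with Some a => [a] | None => [] end.

Definition associative_var (H : list I01 -> option I01) : Prop :=
  forall x y z, H (x ++ y ++ z) = H (x ++ opt_tuple (H y) ++ z).

Definition is_tnorm (T : I01 -> I01 -> I01) : Prop :=
  (forall a a' b, v a <= v a' -> v (T a b) <= v (T a' b)) /\
  (forall a b b', v b <= v b' -> v (T a b) <= v (T a b')) /\
  (forall a b, T a b = T b a) /\
  (forall a b c, T (T a b) c = T a (T b c)) /\
  (forall a, T one01 a = a).

Definition binary_part_tnorm (H : list I01 -> option I01) : Prop :=
  exists T : I01 -> I01 -> I01, (forall a b, H [a; b] = Some (T a b)) /\ is_tnorm T.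

Definition variadic_tnorm (H : list I01 -> option I01) : Prop :=
  associative_var H /\ eps_standard H /\ binary_part_tnorm H.

Definition cond1 (inc : bool) (F : list I01 -> R) : Prop :=
  preassociative F /\ unarily_quasi_range_idempotent F /\
  (forall a b, F [a; b] = F [b; a]) /\
  (forall b, weak_mono_dir inc (fun a => F [a; b])) /\
  (forall a, weak_mono_dir inc (fun b => F [a; b])) /\
  (forall a, F [one01; a] = F [a]).

Definition factors_through (F : list I01 -> R) (f : I01 -> R)
    (H : list I01 -> option I01) : Prop :=
  forall x, x <> [] -> exists c, H x = Some c /\ F x = f c.

Definition cond2 (inc : bool) (F : list I01 -> R) (f : I01 -> R)
    (H : list I01 -> option I01) : Prop :=
  strict_mono_dir inc f /\ variadic_tnorm H /\ factors_through F f H.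

(* Main.v *)
Require Import Defs.
From Stdlib Require Import Reals List Lra ClassicalEpsilon ProofIrrelevance.
Import ListNotations.
Open Scope R_scope.

Lemma I01_eq (a b : I01) : v a = v b -> a = b.
Proof.
  destruct a as [x hx], b as [y hy]; unfold v; simpl; intros ->.
  f_equal; apply proof_irrelevance.
Qed.

Lemma inj_gen inc (f : I01 -> R) : strict_mono_dir inc f ->
  forall a b, f a = f b -> a = b.
Proof.
  intros hf a b e; apply I01_eq.
  destruct (Rtotal_order (v a) (v b)) as [h|[h|h]]; auto;
  [specialize (hf a b h) | specialize (hf b a h)]; destruct inc; lra.
Qed.

Lemma weak_gen inc (f : I01 -> R) : strict_mono_dir inc f ->
  forall a b, v a <= v b -> if inc then f a <= f b else f b <= f a.
Proof.
  intros hf a b h. destruct (Rle_lt_or_eq_dec _ _ h) as [h'|h'].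
  - specialize (hf a b h'); destruct inc; lra.
  - apply I01_eq in h'; subst; destruct inc; lra.
Qed.

Lemma back_gen inc (f : I01 -> R) : strict_mono_dir inc f ->
  forall c d, (if inc then f c <= f d else f d <= f c) -> v c <= v d.
Proof.
  intros hf c d h. destruct (Rle_lt_dec (v c) (v d)) as [h'|h']; auto.
  specialize (hf d c h'); destruct inc; lra.
Qed.

Section S.
Variable F : list I01 -> R.
Definition sel (x : list I01) : I01 :=
  epsilon (inhabits one01) (fun a => F [a] = F x).
Definition Hc (x : list I01) : option I01 :=
  match x with [] => None | _ => Some (sel x) end.
End S.

Lemma sel_spec F : unarily_quasi_range_idempotent F ->
  forall x, x <> [] -> F [sel F x] = F x.
Proof.
  intros hq x hx. unfold sel. apply epsilon_spec.
  apply (proj2 (hq (F x))). exists x; auto.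
Qed.

Theorem theorem5p3 (inc : bool) (F : list I01 -> R)
  (hstd : standard F) (hF1 : strict_mono_dir inc (fun a => F [a])) :
  (cond1 inc F <-> exists (f : I01 -> R) (H : list I01 -> option I01), cond2 inc F f H) /\
  (forall (f : I01 -> R) (H : list I01 -> option I01), cond2 inc F f H ->
     forall a, f a = F [a]).
Proof.
  assert (inj1 := inj_gen _ _ hF1).
  assert (part2 : forall (f : I01 -> R) (H : list I01 -> option I01), cond2 inc F f H ->
     forall a, H [a] = Some a /\ f a = F [a]).
  { intros f H [hf [[ha [[h0 h1] [T [hT [_ [_ [_ [_ h1T]]]]]]]] hft]] a.
    destruct (hft [a] ltac:(discriminate)) as [c [hc e]].
    assert (ac : a = c).
    { pose proof (ha [one01] [a] []) as E. simpl in E. rewrite hc in E. simpl in E.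
      rewrite !hT in E. rewrite !h1T in E. congruence. }
    subst c. split; auto. }
  split; [split|].
  - intros [hp [hq [hs [hm1 [hm2 h1]]]]].
    assert (hsel := sel_spec F hq).
    assert (Hdet : forall x y, x <> [] -> y <> [] -> F x = F y -> sel F x = sel F y).
    { intros x y hx hy e. apply inj1. rewrite (hsel x hx), (hsel y hy). auto. }
    exists (fun a => F [a]), (Hc F). split; [exact hF1|split].
    + split; [|split].
      * intros x y z. destruct y as [|b y]; [reflexivity|].
        simpl opt_tuple.
        assert (HS : forall w, w <> [] -> Hc F w = Some (sel F w))
          by (intros [|? ?] hw; [congruence|reflexivity]).
        assert (ne : forall u, x ++ u ++ z <> [] -> True) by auto.
        rewrite !HS; [f_equal; apply Hdet| | ]; try (destruct x; discriminate).
        apply hp. symmetry; apply hsel; discriminate.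
      * split; [reflexivity|]. intros [|a x] h; [congruence|discriminate].
      * exists (fun a b => sel F [a; b]). split; [reflexivity|].
        assert (hT : forall a b, F [sel F [a;b]] = F [a;b]) by (intros; apply hsel; discriminate).
        split; [|split; [|split; [|split]]].
        -- intros a a' b h. apply (back_gen _ _ hF1). simpl. rewrite !hT.
           apply (hm1 b a a' h).
        -- intros a b b' h. apply (back_gen _ _ hF1). simpl. rewrite !hT.
           apply (hm2 a b b' h).
        -- intros a b. apply inj1. rewrite !hT. auto.
        -- intros a b c. apply inj1. rewrite !hT.
           pose proof (hp [] [a;b] [sel F [a;b]] [c] (eq_sym (hT a b))) as E1.
           pose proof (hp [a] [b;c] [sel F [b;c]] [] (eq_sym (hT b c))) as E2.
           simpl in E1, E2. congruence.
        -- intros a. apply inj1. rewrite hT. auto.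
    + intros x hx. exists (sel F x). split.
      * destruct x; [congruence|reflexivity].
      * symmetry; apply hsel; auto.
  - intros [f [H hc]].
    assert (hp2 := part2 f H hc).
    destruct hc as [hf [[ha [[h0 hne] [T [hT [m1 [m2 [sy [_ h1T]]]]]]]] hft]].
    assert (injf := inj_gen _ _ hf).
    assert (hFT : forall a b, F [a;b] = f (T a b)).
    { intros a b. destruct (hft [a;b] ltac:(discriminate)) as [c [hc e]].
      rewrite hT in hc. congruence. }
    split; [|split; [|split; [|split; [|split]]]].
    + intros x y y' z e.
      destruct y as [|b y].
      { assert (y' = []) by (apply hstd; auto). subst; auto. }
      destruct y' as [|b' y'].
      { assert (b :: y = []) by (apply hstd; auto). discriminate. }
      destruct (hft (b::y) ltac:(discriminate)) as [c [hc ec]].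
      destruct (hft (b'::y') ltac:(discriminate)) as [c' [hc' ec']].
      assert (c = c') by (apply injf; congruence). subst c'.
      assert (EH : H (x ++ (b::y) ++ z) = H (x ++ (b'::y') ++ z)).
      { rewrite ha, hc, (ha x (b'::y') z), hc'. reflexivity. }
      destruct (hft (x ++ (b::y) ++ z)) as [d [hd ed]].
      { destruct x; discriminate. }
      destruct (hft (x ++ (b'::y') ++ z)) as [d' [hd' ed']].
      { destruct x; discriminate. }
      congruence.
    + intros r; split.
      * intros [a e]. exists [a]; split; [discriminate|auto].
      * intros [x [hx e]]. destruct (hft x hx) as [c [hc ec]].
        exists c. rewrite <- (proj2 (hp2 c)). congruence.
    + intros a b. rewrite !hFT, sy. reflexivity.
    + intros b a a' h. simpl. rewrite !hFT. apply (weak_gen _ _ hf). apply m1; auto.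
    + intros a b b' h. simpl. rewrite !hFT. apply (weak_gen _ _ hf). apply m2; auto.
    + intros a. rewrite hFT, h1T. apply (proj2 (hp2 a)).
  - intros f H hc a. apply (proj2 (part2 f H hc a)).
Qed.
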